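(* Let $f\in\mathcal{F}_k$. Then the Lovász hinge $L^f$ embeds the loss $\ell_{\text{abs}}^f:\mathcal{V}\times\mathcal{Y}\to\mathbb{R}_+$ given by $\ell_{\text{abs}}^f(v,y)=f(\{i: v_iy_i<0\})+f(\{i:v_iy_i\le 0\})$; moreover $\ell_{\text{abs}}^f$ coincides with the restriction of $L^f$ to $\mathcal{V}\times\mathcal{Y}$.
   Context: $[k]=\{1,\dots,k\}$, $\mathcal{Y}=\{-1,1\}^k$, $\mathcal{V}=\{-1,0,1\}^k$, $\Delta_\mathcal{Y}$ the probability distributions on $\mathcal{Y}$. $u\odot u'$ is the entrywise product, $\mathbbm{1}$ the all-ones vector, $(x)_+$ the entrywise positive part. $\mathcal{F}_k$ is the class of set functions $f:2^{[k]}\to\mathbb{R}$ that are submodular ($f(S)+f(T)\ge f(S\cup T)+f(S\cap T)$), increasing ($f(S\cup T)\ge f(S)$ for disjoint $S,T$) and normalized ($f(\emptyset)=0$). The Lovász extension is $F(x)=\max_{\pi}\sum_{i=1}^k x_{\pi_i}(f(\{\pi_1,\dots,\pi_i\})-f(\{\pi_1,\dots,\pi_{i-1}\}))$ for $x\in\mathbb{R}^k_+$ (max over permutations of $[k]$), and the Lovász hinge is $L^f(u,y)=F((\mathbbm{1}-u\odot y)_+)$ for $u\in\mathbb{R}^k,y\in\mathcal{Y}$. For a loss $\ell$ and $p\in\Delta_\mathcal{Y}$, $\ell(r;p)=\sum_y p_y\ell(r,y)$. A set $\mathcal{S}\subseteq\mathcal{R}$ is representative for a loss $\ell:\mathcal{R}\times\mathcal{Y}\to\mathbb{R}_+$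 if $\arg\min_{r\in\mathcal{R}}\ell(r;p)\cap\mathcal{S}\neq\emptyset$ for all $p$. A loss $L:\mathbb{R}^d\times\mathcal{Y}\to\mathbb{R}_+$ embeds $\ell:\mathcal{R}\times\mathcal{Y}\to\mathbb{R}_+$ if there are a representative set $\mathcal{S}$ for $\ell$ and an injective $\varphi:\mathcal{S}\to\mathbb{R}^d$ such that (i) $L(\varphi(r),y)=\ell(r,y)$ for all $r\in\mathcal{S},y\in\mathcal{Y}$, and (ii) for all $p\in\Delta_\mathcal{Y}$ and $r\in\mathcal{S}$: $r\in\arg\min_{r'\in\mathcal{R}}\ell(r';p)\iff\varphi(r)\in\arg\min_{u\in\mathbb{R}^d}L(u;p)$. *)

(* Defs.v *)
From HB Require Import structures.
From mathcomp Require Import all_boot all_order all_algebra.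
From mathcomp Require Import fingroup perm.
From mathcomp Require Import reals.
Set Implicit Arguments. Unset Strict Implicit. Unset Printing Implicit Defensive.
Import Order.TTheory GRing.Theory Num.Theory.
Local Open Scope ring_scope.

Section Defs.
Variable R : realType.

(* Labels: Y = {-1,1}^k, encoded as boolean vectors; true ↦ 1, false ↦ -1. *)
Definition Ylab (k : nat) := {ffun 'I_k -> bool}.
Definition yv (k : nat) (y : Ylab k) (i : 'I_k) : R := if y i then 1 else -1.

Definition Vrep (k : nat) :=
  {v : 'I_k -> R | forall i, v i = -1 \/ v i = 0 \/ v i = 1}.

Definition submodular (k : nat) (f : {set 'I_k} -> R) :=
  forall S T : {set 'I_k}, f (S :|: T) + f (S :&: T) <= f S + f T.
Definition increasing_sf (k : nat) (f : {set 'I_k} -> R) :=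
  forall S T : {set 'I_k}, [disjoint S & T] -> f S <= f (S :|: T).
Definition normalized_sf (k : nat) (f : {set 'I_k} -> R) := f set0 = 0.
Definition in_Fk (k : nat) (f : {set 'I_k} -> R) :=
  [/\ submodular f, increasing_sf f & normalized_sf f].

Definition lovasz_term (k : nat) (f : {set 'I_k} -> R) (x : 'I_k -> R)
    (pi : {perm 'I_k}) : R :=
  \sum_(i : 'I_k)
     x (pi i) * (f [set pi j | j : 'I_k & (j <= i)%N]
                 - f [set pi j | j : 'I_k & (j < i)%N]).
Definition lovasz_ext (k : nat) (f : {set 'I_k} -> R) (x : 'I_k -> R) : R :=
  \big[Num.max/lovasz_term f x 1%g]_(pi : {perm 'I_k}) lovasz_term f x pi.

Definition lovasz_hinge (k : nat) (f : {set 'I_k} -> R) (u : 'I_k -> R)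
    (y : Ylab k) : R :=
  lovasz_ext f (fun i => Num.max 0 (1 - u i * yv y i)).

Definition ell_abs (k : nat) (f : {set 'I_k} -> R) (v : Vrep k) (y : Ylab k) : R :=
  f [set i | sval v i * yv y i < 0] + f [set i | sval v i * yv y i <= 0].

Definition is_distr (k : nat) (p : Ylab k -> R) :=
  (forall y, 0 <= p y) /\ \sum_(y : Ylab k) p y = 1.

Definition exp_loss (k : nat) (Rep : Type) (ell : Rep -> Ylab k -> R)
    (p : Ylab k -> R) (r : Rep) : R :=
  \sum_(y : Ylab k) p y * ell r y.

Definition is_argmin (k : nat) (Rep : Type) (ell : Rep -> Ylab k -> R)
    (p : Ylab k -> R) (r : Rep) :=
  forall r' : Rep, exp_loss ell p r <= exp_loss ell p r'.

Definition representative (k : nat) (Rep : Type) (ell : Rep -> Ylab k -> R)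
    (S : Rep -> Prop) :=
  forall p, is_distr p -> exists r, S r /\ is_argmin ell p r.

Definition embeds (k d : nat) (Rep : Type) (L : ('I_d -> R) -> Ylab k -> R)
    (ell : Rep -> Ylab k -> R) :=
  exists (S : Rep -> Prop) (phi : Rep -> ('I_d -> R)),
    [/\ representative ell S,
        (forall r1 r2, S r1 -> S r2 -> phi r1 = phi r2 -> r1 = r2),
        (forall r y, S r -> L (phi r) y = ell r y) &
        (forall p r, is_distr p -> S r ->
           (is_argmin ell p r <-> is_argmin L p (phi r)))].
End Defs.

(* Main.v *)
Require Import Defs.
From mathcomp Require Import all_boot all_order all_algebra.
From mathcomp Require Import fingroup perm.
From mathcomp Require Import reals.
From mathcomp Require Import ring lra.
From Stdlib Require Import ProofIrrelevance.
Set Implicit Arguments. Unset Strict Implicit. Unset Printing Implicit Defensive.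
Import Order.TTheory GRing.Theory Num.Theory.
Local Open Scope ring_scope.

Definition Pre (k : nat) (pi : {perm 'I_k}) (n : nat) : {set 'I_k} :=
  [set pi j | j : 'I_k & (j < n)%N].
Definition Dm (R : realType) (k : nat) (f : {set 'I_k} -> R) (pi : {perm 'I_k}) (o : 'I_k) : R :=
  f (Pre pi o.+1) - f (Pre pi o).
Definition ind (R : realType) (k : nat) (A : {set 'I_k}) (i : 'I_k) : R :=
  if i \in A then 1 else 0.

Lemma termE (R : realType) (k : nat) (f : {set 'I_k} -> R) x pi :
  lovasz_term f x pi = \sum_o x (pi o) * Dm f pi o.
Proof. by []. Qed.

Lemma term_ext (R : realType) (k : nat) (f : {set 'I_k} -> R) x z pi :
  (forall i, x i = z i) -> lovasz_term f x pi = lovasz_term f z pi.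
Proof. by move=> h; rewrite !termE; apply: eq_bigr => o _; rewrite h. Qed.

Lemma term_sum (R : realType) (k : nat) (f : {set 'I_k} -> R) (I : finType)
  (w : I -> R) (z : I -> 'I_k -> R) pi :
  lovasz_term f (fun i => \sum_m w m * z m i) pi = \sum_m w m * lovasz_term f (z m) pi.
Proof.
rewrite termE; under eq_bigr do rewrite mulr_suml.
rewrite exchange_big; apply: eq_bigr => m _; rewrite termE mulr_sumr.
by apply: eq_bigr => o _; rewrite mulrA.
Qed.

Lemma term_add (R : realType) (k : nat) (f : {set 'I_k} -> R) x z pi :
  lovasz_term f (fun i => x i + z i) pi = lovasz_term f x pi + lovasz_term f z pi.
Proof. by rewrite !termE -big_split; apply: eq_bigr => o _; rewrite mulrDl. Qed.

Lemma term_scale (R : realType) (k : nat) (f : {set 'I_k} -> R) a x pi :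
  lovasz_term f (fun i => a * x i) pi = a * lovasz_term f x pi.
Proof. by rewrite !termE mulr_sumr; apply: eq_bigr => o _; rewrite mulrA. Qed.

Lemma memPre (k : nat) (pi : {perm 'I_k}) n i : (i \in Pre pi n) = (val ((pi^-1)%g i) < n)%N.
Proof. by rewrite -{1}(permKV pi i) /Pre mem_imset ?inE //; exact: perm_inj. Qed.

Lemma Pre0 (k : nat) (pi : {perm 'I_k}) : Pre pi 0 = set0.
Proof. by apply/setP => i; rewrite memPre inE. Qed.

Lemma PreS (k : nat) (pi : {perm 'I_k}) (o : 'I_k) : Pre pi o.+1 = pi o |: Pre pi o.
Proof.
apply/setP => i; rewrite !inE !memPre ltnS leq_eqVlt; congr orb.
by apply/eqP/eqP => [/val_inj <- | ->]; rewrite ?permKV ?permK.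
Qed.

Lemma PreT (k : nat) (pi : {perm 'I_k}) n : (k <= n)%N -> Pre pi n = setT.
Proof. by move=> h; apply/setP => i; rewrite memPre inE (leq_trans (ltn_ord _) h). Qed.

Lemma notinPre (k : nat) (pi : {perm 'I_k}) (o : 'I_k) : pi o \notin Pre pi o.
Proof. by rewrite memPre permK ltnn. Qed.

Lemma sum_lt_step (R : realType) (k : nat) (g : 'I_k -> R) n (hn : (n < k)%N) :
  \sum_(o : 'I_k | (o < n.+1)%N) g o = \sum_(o : 'I_k | (o < n)%N) g o + g (Ordinal hn).
Proof.
rewrite (bigD1 (Ordinal hn)) //= addrC; congr (_ + _); apply: eq_bigl => o /=.
rewrite ltnS leq_eqVlt -val_eqE /=.
by case: eqP => [->|_] /=; rewrite ?ltnn ?andbT.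
Qed.

Lemma sum_lt_big (R : realType) (k : nat) (g : 'I_k -> R) n : (k <= n)%N ->
  \sum_(o : 'I_k | (o < n)%N) g o = \sum_o g o.
Proof. by move=> h; apply: eq_bigl => o; rewrite (leq_trans (ltn_ord o) h). Qed.

Lemma B_aux (R : realType) (k : nat) (f : {set 'I_k} -> R) (pi : {perm 'I_k}) n :
  f set0 = 0 -> \sum_(o : 'I_k | (o < n)%N) Dm f pi o = f (Pre pi n).
Proof.
move=> f0; elim: n => [|n IH].
  by rewrite big_pred0 // Pre0 f0.
case: (ltnP n k) => hn.
  by rewrite (sum_lt_step _ hn) IH /Dm /=; ring.
rewrite sum_lt_big ?(leq_trans hn) // -(sum_lt_big _ hn) IH.
by rewrite !PreT // (leq_trans hn).
Qed.

Lemma termB (R : realType) (k : nat) (f : {set 'I_k} -> R) (pi : {perm 'I_k}) n :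
  f set0 = 0 -> lovasz_term f (ind R (Pre pi n)) pi = f (Pre pi n).
Proof.
move=> f0; rewrite termE -(B_aux _ _ f0) [RHS]big_mkcond /=.
by apply: eq_bigr => o _; rewrite /ind memPre permK; case: ifP; rewrite ?mul1r ?mul0r.
Qed.

Lemma A_aux (R : realType) (k : nat) (f : {set 'I_k} -> R) (pi : {perm 'I_k}) A n :
  submodular f -> f set0 = 0 ->
  \sum_(o : 'I_k | (o < n)%N) ind R A (pi o) * Dm f pi o <= f (A :&: Pre pi n).
Proof.
move=> fs f0; elim: n => [|n IH].
  by rewrite big_pred0 // Pre0 setI0 f0.
case: (ltnP n k) => hn; last first.
  rewrite sum_lt_big ?(leq_trans hn) // -(sum_lt_big _ hn).
  by rewrite !PreT ?(leq_trans hn) // in IH *.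
rewrite (sum_lt_step _ hn); set o := Ordinal hn.
have -> : Pre pi n.+1 = Pre pi o.+1 by [].
have E : Pre pi n = Pre pi o by []. rewrite E in IH.
rewrite /ind; case: ifP => hA; last first.
  rewrite mul0r addr0; suff -> : A :&: Pre pi o.+1 = A :&: Pre pi o by [].
  apply/setP => i; rewrite !inE PreS !inE.
  by case: (eqVneq i (pi o)) => [->|] //=; rewrite hA.
have := fs (Pre pi o) (A :&: Pre pi o.+1).
have -> : Pre pi o :|: A :&: Pre pi o.+1 = Pre pi o.+1.
  apply/setP => i; rewrite !inE PreS !inE.
  case: (eqVneq i (pi o)) => [->|] //=.
    by case: (pi o \in Pre pi n) => //=; rewrite andbT.
  by case: (i \in Pre pi n); rewrite ?andbF.
have -> : Pre pi o :&: (A :&: Pre pi o.+1) = A :&: Pre pi o.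
  apply/setP => i; rewrite !inE PreS !inE.
  case: (eqVneq i (pi o)) => [->|] //=.
    by case: (pi o \in Pre pi n); case: (pi o \in A).
  by case: (i \in Pre pi n); case: (i \in A).
rewrite /Dm mul1r => h; lra.
Qed.

Lemma termA (R : realType) (k : nat) (f : {set 'I_k} -> R) (pi : {perm 'I_k}) A :
  submodular f -> f set0 = 0 -> lovasz_term f (ind R A) pi <= f A.
Proof.
move=> fs f0; rewrite termE -(sum_lt_big _ (leqnn k)).
by have := A_aux pi A k fs f0; rewrite PreT // setIT.
Qed.

Lemma le_F (R : realType) (k : nat) (f : {set 'I_k} -> R) x pi :
  lovasz_term f x pi <= lovasz_ext f x.
Proof.
rewrite /lovasz_ext; have : pi \in index_enum {perm 'I_k} by rewrite mem_index_enum.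
elim: (index_enum _) => // a s IH; rewrite big_cons inE => /orP [/eqP ->|/IH h].
  by rewrite le_max lexx.
by rewrite le_max h orbT.
Qed.

Lemma F_le (R : realType) (k : nat) (f : {set 'I_k} -> R) x M :
  (forall pi, lovasz_term f x pi <= M) -> lovasz_ext f x <= M.
Proof.
move=> h; rewrite /lovasz_ext; apply: (big_ind (fun a => a <= M)) => //.
by move=> a b ha hb; rewrite ge_max ha hb.
Qed.

Definition at_ (R : realType) (k : nat) (x : 'I_k -> R) (m : nat) : R :=
  if insub m is Some o then x o else 0.

Lemma at_ord (R : realType) (k : nat) (x : 'I_k -> R) (o : 'I_k) : at_ x o = x o.
Proof. by rewrite /at_ valK. Qed.

Lemma at_ge (R : realType) (k : nat) (x : 'I_k -> R) m : (k <= m)%N -> at_ x m = 0.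
Proof. by move=> h; rewrite /at_ insubN // -leqNgt. Qed.

Lemma at_mono (R : realType) (k : nat) (x : 'I_k -> R) :
  (forall i, 0 <= x i) -> (forall i j : 'I_k, (i <= j)%N -> x j <= x i) ->
  forall m n, (m <= n)%N -> at_ x n <= at_ x m.
Proof.
move=> h0 hs m n hmn; case: (ltnP n k) => hn.
  have hm : (m < k)%N := leq_ltn_trans hmn hn.
  have -> : m = val (Ordinal hm) by []. have -> : n = val (Ordinal hn) by [].
  by rewrite !at_ord; apply: hs.
rewrite (at_ge _ hn); case: (ltnP m k) => hm.
  by have -> : m = val (Ordinal hm) by []; rewrite at_ord.
by rewrite at_ge.
Qed.

Lemma at_ge0 (R : realType) (k : nat) (x : 'I_k -> R) m :
  (forall i, 0 <= x i) -> 0 <= at_ x m.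
Proof. by move=> h; rewrite /at_; case: insub. Qed.

Lemma tele (R : realType) (k : nat) (c : nat -> R) (o : 'I_k) :
  \sum_(m : 'I_k) (c m - c m.+1) * (if (o <= m)%N then 1 else 0) = c o - c k.
Proof.
rewrite (eq_bigr (fun m : 'I_k => if (o <= m)%N then c m - c m.+1 else 0)); last first.
  by move=> m _; case: ifP; rewrite ?mulr1 ?mulr0.
rewrite -big_mkcond /=.
have -> : \sum_(m < k | (o <= m)%N) (c m - c m.+1) = \sum_(o <= m < k) (c m - c m.+1).
  by rewrite big_geq_mkord.
rewrite (eq_bigr (fun m => - (c m.+1 - c m))); last by move=> m _; rewrite opprB.
by rewrite sumrN telescope_sumr ?opprB // ltnW.
Qed.

Lemma tele_full (R : realType) (k : nat) (c : nat -> R) :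
  \sum_(m : 'I_k) (c m - c m.+1) = c 0%N - c k.
Proof.
rewrite -(big_mkord xpredT (fun m => c m - c m.+1)).
rewrite (eq_bigr (fun m => - (c m.+1 - c m))); last by move=> m _; rewrite opprB.
by rewrite sumrN telescope_sumr ?opprB.
Qed.

Lemma Fsort (R : realType) (k : nat) (f : {set 'I_k} -> R) x (pi : {perm 'I_k}) :
  submodular f -> f set0 = 0 ->
  (forall i, 0 <= x i) -> (forall i j : 'I_k, (i <= j)%N -> x (pi j) <= x (pi i)) ->
  lovasz_ext f x = lovasz_term f x pi.
Proof.
move=> fs f0 h0 hs; apply/eqP; rewrite eq_le le_F andbT; apply: F_le => pi'.
set c := at_ (fun o => x (pi o)).
set d := fun m : 'I_k => c m - c m.+1.
have hx : forall i, x i = \sum_m d m * ind R (Pre pi m.+1) i.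
  move=> i; rewrite (eq_bigr (fun m : 'I_k => d m * (if ((pi^-1)%g i <= m)%N then 1 else 0))).
    by rewrite tele /c at_ord at_ge // subr0 permKV.
  by move=> m _; rewrite /ind memPre ltnS.
have hd : forall m : 'I_k, 0 <= d m.
  by move=> m; rewrite /d subr_ge0; apply: at_mono.
rewrite (@term_ext _ _ f _ _ pi' hx) (@term_ext _ _ f _ _ pi hx) !term_sum; apply: ler_sum => m _.
by rewrite termB //; apply: ler_wpM2l => //; apply: termA.
Qed.

Lemma exists_sort (R : realType) (k : nat) (x : 'I_k -> R) :
  exists pi : {perm 'I_k}, forall i j : 'I_k, (i <= j)%N -> x (pi j) <= x (pi i).
Proof.
pose r := fun i j : 'I_k => x j <= x i.
have rt : total r by move=> i j; rewrite /r le_total.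
have rtr : transitive r by move=> b a c; rewrite /r => h1 h2; exact: le_trans h2 h1.
have rr : reflexive r by move=> i; rewrite /r lexx.
pose s := sort r (enum 'I_k).
have hsz : size s = k by rewrite size_sort size_enum_ord.
have hu : uniq s by rewrite sort_uniq enum_uniq.
have hso : sorted r s by apply: sort_sorted.
pose g := fun o : 'I_k => nth o s o.
have gE : forall o a : 'I_k, g o = nth a s o.
  by move=> o a; rewrite /g (set_nth_default a) // hsz.
have ginj : injective g.
  move=> a b; rewrite (gE a a) (gE b a) => /eqP; rewrite nth_uniq ?hsz //.
  by move=> /eqP /val_inj.
exists (perm ginj) => i j hij; rewrite !permE (gE i i) (gE j i).
by apply: (sorted_leq_nth rtr rr i hso); rewrite ?inE ?hsz.
Qed.

Lemma levelset (R : realType) (k : nat) (x : 'I_k -> R) (pi : {perm 'I_k}) t :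
  (forall i j : 'I_k, (i <= j)%N -> x (pi j) <= x (pi i)) ->
  exists m, [set i | t <= x i] = Pre pi m.
Proof.
move=> hs; pose S := [set o : 'I_k | t <= x (pi o)].
exists (\max_(o in S) (val o).+1).
have cl : forall o : 'I_k, (t <= x (pi o)) = (o < \max_(o in S) (val o).+1)%N.
  move=> o; apply/idP/idP => h.
    by apply: (@leq_bigmax_cond _ (fun o => o \in S) (fun o : 'I_k => (val o).+1)); rewrite inE.
  apply/negPn/negP => hn.
  have : (\max_(o in S) (val o).+1 <= o)%N.
    apply/bigmax_leqP => o'; rewrite inE => ho'.
    rewrite ltnNge; apply/negP => hle.
    by rewrite (le_trans ho' (hs _ _ hle)) in hn.
  by rewrite leqNgt h.
by apply/setP => i; rewrite inE memPre -cl permKV.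
Qed.

Lemma F012 (R : realType) (k : nat) (f : {set 'I_k} -> R) x :
  submodular f -> f set0 = 0 ->
  (forall i, x i = 0 \/ x i = 1 \/ x i = 2) ->
  lovasz_ext f x = f [set i | 1 <= x i] + f [set i | 2 <= x i].
Proof.
move=> fs f0 hv; have [pi hpi] := exists_sort x.
have h0 : forall i, 0 <= x i by move=> i; case: (hv i) => [->|[->|->]]; lra.
rewrite (Fsort fs f0 h0 hpi).
have hind : forall i, x i = ind R [set i | 1 <= x i] i + ind R [set i | 2 <= x i] i.
  move=> i; rewrite /ind !inE.
  by case: (hv i) => [->|[->|->]]; case: lerP => h1; case: lerP => h2; lra.
rewrite (@term_ext _ _ f _ _ pi hind) term_add.
have [m1 ->] := levelset 1 hpi. have [m2 ->] := levelset 2 hpi.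
by rewrite !termB.
Qed.

Lemma ell_hinge (R : realType) (k : nat) (f : {set 'I_k} -> R) (v : Vrep R k) y :
  submodular f -> f set0 = 0 ->
  ell_abs f v y = lovasz_hinge f (sval v) y.
Proof.
move=> fs f0.
have hs : forall i, let s := sval v i * yv R y i in s = -1 \/ s = 0 \/ s = 1.
  move=> i /=; rewrite /yv; case: (y i); case: (svalP v i) => [->|[->|->]];
  rewrite ?mulr1 ?mulrN1 ?mul0r ?opprK ?oppr0; auto.
rewrite /lovasz_hinge F012 //; last first.
  move=> i; case: (hs i) => [->|[->|->]]; rewrite ?subr0 ?opprK ?subrr.
  - by right; right; rewrite max_r //; lra.
  - by right; left; rewrite max_r //; lra.
  - by left; rewrite max_l.
rewrite /ell_abs addrC; congr (f _ + f _); apply/setP => i; rewrite !inE;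
  case: (hs i) => [->|[->|->]]; rewrite ?subr0 ?opprK ?subrr;
  rewrite ?max_r ?max_l //; try lra; apply/idP/idP => h; lra.
Qed.

Lemma Dm_ge0 (R : realType) (k : nat) (f : {set 'I_k} -> R) (pi : {perm 'I_k}) o :
  increasing_sf f -> 0 <= Dm f pi o.
Proof.
move=> hi; rewrite /Dm subr_ge0 PreS setUC; apply: hi.
by rewrite disjoint_sym disjoints1 notinPre.
Qed.

Lemma F_mono (R : realType) (k : nat) (f : {set 'I_k} -> R) x z :
  increasing_sf f -> (forall i, x i <= z i) -> lovasz_ext f x <= lovasz_ext f z.
Proof.
move=> hi h; apply: F_le => pi; apply: le_trans (le_F _ _ pi).
rewrite !termE; apply: ler_sum => o _; apply: ler_wpM2r; first exact: Dm_ge0.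
exact: h.
Qed.

Definition gth (R : realType) (t s : R) : R :=
  if t <= s then 1 else if s <= - t then -1 else 0.

Lemma gthV (R : realType) (t s : R) : gth t s = -1 \/ gth t s = 0 \/ gth t s = 1.
Proof. by rewrite /gth; case: ifP => _; [|case: ifP => _]; auto. Qed.

Lemma gth_mono (R : realType) (t a b : R) : 0 < t -> a <= b -> gth t a <= gth t b.
Proof.
move=> ht hab; rewrite /gth.
case: (lerP t a) => h1; case: (lerP t b) => h2; case: (lerP a (-t)) => h3;
  case: (lerP b (-t)) => h4; lra.
Qed.

Lemma gth_y (R : realType) (t a yy : R) : 0 < t -> (yy = 1 \/ yy = -1) ->
  gth t a * yy = gth t (a * yy).
Proof.
move=> ht [->|->]; first by rewrite !mulr1.
rewrite !mulrN1 /gth.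
case: (lerP t a) => h1; case: (lerP t (-a)) => h2; case: (lerP a (-t)) => h3;
  case: (lerP (-a) (-t)) => h4; lra.
Qed.

Lemma yvV (R : realType) (k : nat) (y : Ylab k) i : yv R y i = 1 \/ yv R y i = -1.
Proof. by rewrite /yv; case: (y i); auto. Qed.

Definition mkV (R : realType) (k : nat) (v : 'I_k -> R)
  (h : forall i, v i = -1 \/ v i = 0 \/ v i = 1) : Vrep R k := exist _ v h.

Lemma round_cube (R : realType) (k : nat) (f : {set 'I_k} -> R) (p : Ylab k -> R)
    (u : 'I_k -> R) :
  submodular f -> f set0 = 0 -> (forall y, 0 <= p y) -> (forall i, -1 <= u i <= 1) ->
  exists v : Vrep R k,
    exp_loss (lovasz_hinge f) p (sval v) <= exp_loss (lovasz_hinge f) p u.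
Proof.
move=> fs f0 hp hu.
pose a := fun i => `|u i|.
have [tau htau] := exists_sort a.
pose c := at_ (fun o => a (tau o)).
have c0 : forall m, 0 <= c m by move=> m; apply: at_ge0 => i; exact: normr_ge0.
have cm : forall m n, (m <= n)%N -> c n <= c m.
  by apply: at_mono => // i; exact: normr_ge0.
have ck : c k = 0 by rewrite /c at_ge.
have c1 : c 0%N <= 1.
  rewrite /c /at_; case: insub => [o|] //; rewrite /a ler_norml.
  by have := hu (tau o); case/andP => h1 h2; rewrite h1 h2.
pose mu := fun m : 'I_k => c m - c m.+1.
pose mu' := 1 - c 0%N.
have mu0 : forall m, 0 <= mu m by move=> m; rewrite /mu subr_ge0; apply: cm.
have mu'0 : 0 <= mu' by rewrite /mu' subr_ge0.
have musum : mu' + \sum_m mu m = 1 by rewrite /mu tele_full ck /mu'; ring.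
pose V := fun m : 'I_k => @mkV R k (fun i => gth (c m) (u i)) (fun i => gthV (c m) (u i)).
pose V0 := @mkV R k (fun _ => 0) (fun i => or_intror (or_introl erefl)).
pose cand := fun o : option 'I_k => if o is Some m then V m else V0.
pose G := fun o => exp_loss (lovasz_hinge f) p (sval (cand o)).
case: (@arg_minP _ _ _ None xpredT G isT) => best _ hbest.
exists (cand best).
have sumg : forall i, \sum_m mu m * gth (c m) (u i) = u i.
  move=> i; set o := (tau^-1)%g i.
  have hco : c o = `|u i| by rewrite /c at_ord /a /o permKV.
  pose s := if 0 <= u i then 1 else -1 : R.
  have -> : \sum_m mu m * gth (c m) (u i) =
            s * \sum_m mu m * (if (o <= m)%N then 1 else 0).
    rewrite mulr_sumr; apply: eq_bigr => m _.
    case: (eqVneq (mu m) 0) => hm; first by rewrite hm !mul0r mulr0.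
    have mpos : 0 < mu m by rewrite lt0r hm mu0.
    have cpos : 0 < c m by have := c0 m.+1; rewrite /mu in mpos; lra.
    have ge : gth (c m) (u i) = s * (if c m <= `|u i| then 1 else 0).
      rewrite /gth /s; case: (lerP 0 (u i)) => h1;
        [rewrite ger0_norm // | rewrite ltr0_norm //];
        case: (lerP (c m) (u i)) => h2; case: (lerP (u i) (- c m)) => h3;
        case: (lerP (c m) (u i)) => h4; try case: (lerP (c m) (- u i)) => h5; lra.
    rewrite ge -hco.
    have -> : (c m <= c o) = (o <= m)%N.
      case: (leqP o m) => hom; first by apply/idP; apply: cm.
      apply/negbTE; rewrite -ltNge.
      have := cm m.+1 o hom; rewrite /mu in mpos; lra.
    by rewrite mulrCA.
  rewrite tele ck subr0 hco /s; case: (lerP 0 (u i)) => h.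
    by rewrite mul1r ger0_norm.
  by rewrite ltr0_norm // mulN1r opprK.
have key : forall y, mu' * lovasz_hinge f (sval V0) y
                     + \sum_m mu m * lovasz_hinge f (sval (V m)) y
                     <= lovasz_hinge f u y.
  move=> y.
  pose x := fun i => Num.max 0 (1 - u i * yv R y i).
  have xE : forall i, x i = 1 - u i * yv R y i.
    move=> i; rewrite /x max_r //; have := hu i; case/andP => h1 h2.
    by case: (@yvV R _ y i) => ->; lra.
  have [pi hpi] := exists_sort x.
  pose z0 := fun i => Num.max 0 (1 - sval V0 i * yv R y i).
  pose zm := fun (m : 'I_k) i => Num.max 0 (1 - sval (V m) i * yv R y i).
  have dec : forall i, x i = mu' * z0 i + \sum_m mu m * zm m i.
    move=> i; rewrite xE /z0 /zm /= mul0r subr0 max_r ?ler01 // mulr1.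
    have -> : \sum_m mu m * Num.max 0 (1 - gth (c m) (u i) * yv R y i) =
              \sum_m mu m - yv R y i * \sum_m mu m * gth (c m) (u i).
      rewrite mulr_sumr -sumrB; apply: eq_bigr => m _.
      rewrite max_r; first by ring.
      by case: (gthV (c m) (u i)) => [->|[->|->]]; case: (@yvV R _ y i) => ->; lra.
    rewrite sumg; have := musum; lra.
  rewrite /lovasz_hinge; apply: le_trans (le_F _ _ pi).
  rewrite (@term_ext _ _ f _ _ pi dec) term_add term_scale term_sum.
  apply: lerD.
    rewrite (@Fsort _ _ f z0 pi fs f0) //.
      by move=> i; rewrite le_max lexx.
    by move=> i j _; rewrite /z0 /= !mul0r lexx.
  apply: ler_sum => m _.
  case: (eqVneq (mu m) 0) => hm; first by rewrite hm !mul0r.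
  have mpos : 0 < mu m by rewrite lt0r hm mu0.
  have cpos : 0 < c m by have := c0 m.+1; rewrite /mu in mpos; lra.
  rewrite (@Fsort _ _ f (zm m) pi fs f0) //.
    by move=> i; rewrite le_max lexx.
  move=> i j hij; have := hpi i j hij; rewrite !xE => hx.
  rewrite /zm /= !(gth_y _ cpos (@yvV R _ y _)).
  have hg : gth (c m) (u (pi i) * yv R y (pi i)) <= gth (c m) (u (pi j) * yv R y (pi j)).
    by apply: gth_mono => //; lra.
  rewrite ge_max !le_max lexx /=; apply/orP; right; lra.
have step1 : mu' * G None + \sum_m mu m * G (Some m) <= exp_loss (lovasz_hinge f) p u.
  have -> : mu' * G None + \sum_m mu m * G (Some m) =
     \sum_y p y * (mu' * lovasz_hinge f (sval V0) y
                     + \sum_m mu m * lovasz_hinge f (sval (V m)) y).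
    rewrite /G /exp_loss /= mulr_sumr.
    under [RHS]eq_bigr do rewrite mulrDr mulr_sumr.
    rewrite big_split /=; congr (_ + _).
      by apply: eq_bigr => y _; rewrite mulrCA.
    rewrite exchange_big; apply: eq_bigr => m _; rewrite mulr_sumr.
    by apply: eq_bigr => y _; rewrite mulrCA.
  by apply: ler_sum => y _; apply: ler_wpM2l.
apply: le_trans step1.
have -> : exp_loss (lovasz_hinge f) p (sval (cand best)) =
          mu' * G best + \sum_m mu m * G best.
  by rewrite -mulr_suml -mulrDl musum mul1r.
apply: lerD; first by apply: ler_wpM2l => //; apply: hbest.
by apply: ler_sum => m _; apply: ler_wpM2l => //; apply: hbest.
Qed.

Lemma round (R : realType) (k : nat) (f : {set 'I_k} -> R) (p : Ylab k -> R)
    (u : 'I_k -> R) :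
  submodular f -> increasing_sf f -> f set0 = 0 -> (forall y, 0 <= p y) ->
  exists v : Vrep R k,
    exp_loss (lovasz_hinge f) p (sval v) <= exp_loss (lovasz_hinge f) p u.
Proof.
move=> fs fi f0 hp.
pose u' := fun i => if u i < -1 then -1 else if 1 < u i then 1 else u i.
have hu' : forall i, -1 <= u' i <= 1.
  move=> i; rewrite /u'; apply/andP.
  by case: (ltrP (u i) (-1)) => h1; case: (ltrP 1 (u i)) => h2; split; lra.
have [v hv] := round_cube fs f0 hp hu'.
exists v; apply: le_trans hv _.
rewrite /exp_loss; apply: ler_sum => y _; apply: ler_wpM2l => //.
apply: F_mono => // i; rewrite /u'.
case: (@yvV R _ y i) => ->; case: (ltrP (u i) (-1)) => h1; case: (ltrP 1 (u i)) => h2;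
  rewrite ge_max !le_max lexx /=; apply/orP; first [left; lra | right; lra].
Qed.

Lemma encV (R : realType) (k : nat) (P : {set 'I_k} * {set 'I_k}) (i : 'I_k) :
  let v := (if i \in P.1 then -1 else if i \in P.2 then 0 else 1) : R in
  v = -1 \/ v = 0 \/ v = 1.
Proof. by rewrite /=; case: ifP => _; [|case: ifP => _]; auto. Qed.

Definition enc (R : realType) (k : nat) (P : {set 'I_k} * {set 'I_k}) : Vrep R k :=
  @mkV R k (fun i => if i \in P.1 then -1 else if i \in P.2 then 0 else 1) (encV R P).

Lemma ell_ext (R : realType) (k : nat) (f : {set 'I_k} -> R) (v w : Vrep R k) y :
  (forall i, sval v i = sval w i) -> ell_abs f v y = ell_abs f w y.
Proof.
move=> h; rewrite /ell_abs; congr (f _ + f _); apply/setP => i; by rewrite !inE h.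
Qed.

Theorem theorem2 (R : realType) (k : nat) (f : {set 'I_k} -> R) :
  in_Fk f ->
  embeds (@lovasz_hinge R k f) (@ell_abs R k f) /\
  (forall (v : Vrep R k) (y : Ylab k), ell_abs f v y = lovasz_hinge f (sval v) y).
Proof.
case=> fs fi f0; rewrite /normalized_sf in f0.
have hE : forall v y, ell_abs f v y = lovasz_hinge f (sval v) y.
  by move=> v y; exact: ell_hinge.
have ex : forall p (w : Vrep R k),
    exp_loss (lovasz_hinge f) p (sval w) = exp_loss (ell_abs f) p w.
  by move=> p w; apply: eq_bigr => y _; rewrite hE.
split => //.
exists (fun _ => True), (fun v => sval v); split.
- move=> p [hp _].
  pose H := fun P => exp_loss (ell_abs f) p (enc R P).
  case: (@arg_minP _ _ _ (set0, set0) xpredT H isT) => best _ hb.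
  exists (enc R best); split => // r'.
  have -> : exp_loss (ell_abs f) p r' =
            H ([set i | sval r' i == -1], [set i | sval r' i == 0]).
    rewrite /H /exp_loss; apply: eq_bigr => y _; congr (_ * _); apply: ell_ext => i /=.
    rewrite !inE; case: (svalP r' i) => [->|[->|->]]; rewrite ?eqxx //.
      by case: eqP => // h; lra.
    case: eqP => h; first by lra.
    by case: eqP => h'; first by lra.
  exact: hb.
- move=> [v1 h1] [v2 h2] _ _ /= e; subst v2.
  by rewrite (proof_irrelevance _ h1 h2).
- by move=> r y _; rewrite hE.
- move=> p r [hp _] _; split.
    move=> hmin u; have [v hv] := round u fs fi f0 hp.
    by apply: le_trans hv; rewrite !ex; apply: hmin.
  by move=> hmin r'; rewrite -!ex; apply: hmin.
Qed.
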